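(* Let $n\geq5$ and let $Z\in\mathbb{R}^{n\times4}$ be totally positive satisfying Assumption (G). For any $i,j\in[n]$ with $\{i-1,i,i+1\}\cap\{j,j+1\}=\emptyset$ (indices mod $n$), the line $P_{(i-1)i(i+1)}\cap L_{j(j+1)}\subset\mathrm{Gr}_{\mathbb{C}}(2,4)$, consisting of lines in $\mathbb{P}^3$ contained in the plane $Z_{i-1}Z_iZ_{i+1}$ and meeting the line $Z_jZ_{j+1}$, does not intersect $\mathcal{A}_n(Z)$.
   Context: $Z$ totally positive: all $4\times4$ minors positive; its rows $Z_1,\dots,Z_n$ are points of $\mathbb{P}^3$. $\mathcal{A}_n(Z)\subset\mathrm{Gr}_{\mathbb{R}}(2,4)$ is the image of the totally nonnegative Grassmannian $\mathrm{Gr}(2,n)_{\ge0}$ under $\mathrm{rowspan}(X)\mapsto\mathrm{rowspan}(XZ)$. $\langle AB\,ij\rangle$ is the determinant of the matrix with rows $A,B,Z_i,Z_j$. Assumption (G): no line $AB$ has more than $4$ of $\langle AB\,i(i+1)\rangle$, $i\in[n]$ (cyclically, $\langle AB\,n(n+1)\rangle=\langle AB\,1n\rangle$), vanishing. *)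

(* Defs.v *)
From HB Require Import structures.
From mathcomp Require Import all_boot all_order all_algebra.
From mathcomp Require Export reals.
Set Implicit Arguments. Unset Strict Implicit. Unset Printing Implicit Defensive.
Import Order.TTheory GRing.Theory Num.Theory.
Local Open Scope ring_scope.

Definition incr (k n : nat) (f : 'I_k -> 'I_n) : Prop :=
  forall a b : 'I_k, (a < b)%N -> (f a < f b)%N.

Definition totally_positive (R : realType) (n : nat) (Z : 'M[R]_(n, 4)) : Prop :=
  forall f : 'I_4 -> 'I_n, incr f -> 0 < \det (rowsub f Z).

Definition Gr_nonneg (R : realType) (n : nat) (X : 'M[R]_(2, n)) : Prop :=
  \rank X = 2%N /\ forall f : 'I_2 -> 'I_n, incr f -> 0 <= \det (colsub f X).

(* <AB ij> : determinant of the 4x4 matrix with rows A, B, Z_i, Z_j (W has rows A, B) *)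
Definition br (R : realType) (n : nat) (Z : 'M[R]_(n, 4)) (W : 'M[R]_(2, 4))
  (i j : 'I_n) : R :=
  \det (col_mx W (col_mx (row i Z) (row j Z))).

Definition assumptionG (R : realType) (n : nat) (Z : 'M[R]_(n, 4)) : Prop :=
  forall W : 'M[R]_(2, 4), \rank W = 2%N ->
    (#|[set i : 'I_n | br Z W i (ordS i) == 0%R]| <= 4)%N.

Definition in_amplituhedron (R : realType) (n : nat) (Z : 'M[R]_(n, 4))
  (W : 'M[R]_(2, 4)) : Prop :=
  \rank W = 2%N /\ exists X : 'M[R]_(2, n), Gr_nonneg X /\ (W == X *m Z)%MS.

Definition plane3 (R : realType) (n : nat) (Z : 'M[R]_(n, 4)) (i : 'I_n) : 'M[R]_(3, 4) :=
  col_mx (row (ord_pred i) Z) (col_mx (row i Z) (row (ordS i) Z)).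

Definition line2 (R : realType) (n : nat) (Z : 'M[R]_(n, 4)) (j : 'I_n) : 'M[R]_(2, 4) :=
  col_mx (row j Z) (row (ordS j) Z).

(* Main.v *)
Require Import Defs.
From HB Require Import structures.
From mathcomp Require Import all_boot all_order all_algebra all_fingroup reals.
From mathcomp Require Import ring lra zify.
From Stdlib Require Lia.
Import Order.TTheory GRing.Theory Num.Theory.
Local Open Scope ring_scope.
Set Implicit Arguments. Unset Strict Implicit. Unset Printing Implicit Defensive.

Section S.
Variable R : realType.

Definition M4 (g : 'I_4 -> 'rV[R]_4) : 'M[R]_4 := \matrix_(r, s) g r 0 s.

Definition upd (g : 'I_4 -> 'rV[R]_4) (i0 : 'I_4) (v : 'rV[R]_4) :=
  fun r => if r == i0 then v else g r.

Lemma det_lin (g : 'I_4 -> 'rV[R]_4) i0 (I : finType) (w : I -> R) (v : I -> 'rV[R]_4) :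
  g i0 = \sum_a w a *: v a ->
  \det (M4 g) = \sum_a w a * \det (M4 (upd g i0 (v a))).
Proof.
move=> Hg.
have cof : forall u j, cofactor (M4 (upd g i0 u)) i0 j = cofactor (M4 g) i0 j.
  move=> u j; rewrite /cofactor; congr (_ * \det _).
  apply/matrixP => r s; rewrite !mxE /upd.
  by rewrite eq_sym (negbTE (neq_lift i0 r)).
rewrite (expand_det_row _ i0).
under [RHS]eq_bigr => a _.
  rewrite (expand_det_row _ i0) big_distrr /=.
  over.
rewrite /= exchange_big /=; apply: eq_bigr => j _.
rewrite {1}/M4 mxE Hg summxE big_distrl /=; apply: eq_bigr => a _.
rewrite cof !mxE /upd eqxx; exact: esym (mulrA _ _ _).
Qed.

Lemma det_perm4 (g : 'I_4 -> 'rV[R]_4) (s : 'S_4) :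
  \det (M4 (fun r => g (s r))) = (-1) ^+ s * \det (M4 g).
Proof.
have -> : M4 (fun r => g (s r)) = row_perm s (M4 g).
  by apply/matrixP => r c; rewrite !mxE.
by rewrite row_permE det_mulmx det_perm.
Qed.

Lemma det_swap (g : 'I_4 -> 'rV[R]_4) (x y : 'I_4) : x != y ->
  \det (M4 (fun r => g (tperm x y r))) = - \det (M4 g).
Proof. by move=> h; rewrite det_perm4 odd_tperm h expr1 mulN1r. Qed.

Lemma det_rep (g : 'I_4 -> 'rV[R]_4) (x y : 'I_4) : x != y -> g x = g y ->
  \det (M4 g) = 0.
Proof.
move=> h e; apply: (determinant_alternate h) => c; by rewrite !mxE e.
Qed.

Lemma eq_M4 (g g' : 'I_4 -> 'rV[R]_4) : g =1 g' -> M4 g = M4 g'.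
Proof. by move=> e; apply/matrixP => r c; rewrite !mxE e. Qed.

Variable n : nat.
Variable Z : 'M[R]_(n, 4).

Definition quad (a b c d : 'I_n) : 'I_4 -> 'I_n := fun r => nth a [:: a; b; c; d] r.
Definition D (a b c d : 'I_n) : R := \det (M4 (fun r => row (quad a b c d r) Z)).

Lemma D_sw01 a b c d : D a b c d = - D b a c d.
Proof.
rewrite /D -(@det_swap _ 0 1) //; congr (\det _); apply: eq_M4 => r.
by case: r => [[|[|[|[|?]]]] Hr]; rewrite permE.
Qed.
Lemma D_sw12 a b c d : D a b c d = - D a c b d.
Proof.
rewrite /D -(@det_swap _ 1 2) //; congr (\det _); apply: eq_M4 => r.
by case: r => [[|[|[|[|?]]]] Hr]; rewrite permE.
Qed.
Lemma D_sw23 a b c d : D a b c d = - D a b d c.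
Proof.
rewrite /D -(@det_swap _ 2 3) //; congr (\det _); apply: eq_M4 => r.
by case: r => [[|[|[|[|?]]]] Hr]; rewrite permE.
Qed.

Lemma D_pos (a b c d : 'I_n) : totally_positive Z -> (a < b)%N -> (b < c)%N -> (c < d)%N ->
  0 < D a b c d.
Proof.
move=> TP ab bc cd.
have -> : D a b c d = \det (rowsub (quad a b c d) Z).
  by congr (\det _); apply/matrixP => r s; rewrite !mxE.
apply: TP => x y.
case: x => [[|[|[|[|?]]]] Hx] //; case: y => [[|[|[|[|?]]]] Hy] //= _; rewrite /quad /=; lia.
Qed.

Lemma D_rep01 a c d : D a a c d = 0.
Proof. by apply: (@det_rep _ 0 1). Qed.
Lemma D_rep02 a b d : D a b a d = 0.
Proof. by apply: (@det_rep _ 0 2). Qed.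
Lemma D_rep03 a b c : D a b c a = 0.
Proof. by apply: (@det_rep _ 0 3). Qed.
Lemma D_rep12 a b d : D a b b d = 0.
Proof. by apply: (@det_rep _ 1 2). Qed.
Lemma D_rep13 a b c : D a b c b = 0.
Proof. by apply: (@det_rep _ 1 3). Qed.
Lemma D_rep23 a b c : D a b c c = 0.
Proof. by apply: (@det_rep _ 2 3). Qed.

Definition quadv (u v w x : 'rV[R]_4) : 'I_4 -> 'rV[R]_4 := fun r => nth u [:: u; v; w; x] r.

Lemma br_M4 (W : 'M[R]_(2,4)) c d :
  br Z W c d = \det (M4 (quadv (row 0 W) (row 1 W) (row c Z) (row d Z))).
Proof.
rewrite /br; congr (\det _); apply/matrixP => r s; rewrite !mxE.
case: splitP => [k Hk|k Hk]; rewrite ?mxE.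
  case: r Hk => [[|[|[|[|?]]]] Hr] //= Hk; rewrite !mxE;
    try (by congr (W _ s); apply: val_inj);
    by have := ltn_ord k; rewrite -Hk.
case: splitP => [l Hl|l Hl]; rewrite ?mxE;
  case: r Hk => [[|[|[|[|?]]]] Hr] //= Hk; rewrite ?mxE.
all: have := ltn_ord k; have := ltn_ord l.
all: move=> *; try done; lia.
Qed.

Lemma rowXZ (X : 'M[R]_(2,n)) (i : 'I_2) : row i (X *m Z) = \sum_a X i a *: row a Z.
Proof. by rewrite row_mul mulmx_sum_row; apply: eq_bigr => a _; rewrite mxE. Qed.

Lemma br_exp1 (X : 'M[R]_(2,n)) c d :
  br Z (X *m Z) c d = \sum_a X 0 a * \sum_b X 1 b * D a b c d.
Proof.
rewrite br_M4 (det_lin (i0 := 0) (rowXZ X 0)); apply: eq_bigr => a _; congr (_ * _).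
rewrite (det_lin (i0:=1) (w := fun b => X 1 b) (v := fun b => row b Z)); last exact: rowXZ.
apply: eq_bigr => b _; congr (_ * _).
rewrite /D; congr (\det _); apply: eq_M4 => r.
by case: r => [[|[|[|[|?]]]] Hr].
Qed.

Definition Dl (X : 'M[R]_(2,n)) a b := X 0 a * X 1 b - X 0 b * X 1 a.

Lemma br_exp (X : 'M[R]_(2,n)) c d :
  br Z (X *m Z) c d *+ 2 = \sum_a \sum_b Dl X a b * D a b c d.
Proof.
rewrite br_exp1 mulr2n.
have E : \sum_a \sum_b X 0 b * X 1 a * D a b c d = - \sum_a X 0 a * \sum_b X 1 b * D a b c d.
  rewrite exchange_big -sumrN; apply: eq_bigr => a _.
  rewrite big_distrr -sumrN /=; apply: eq_bigr => b _.
  by rewrite (D_sw01 b) mulrN mulrA.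
rewrite -[X in _ + X]opprK -E -sumrB; apply: eq_bigr => a _.
rewrite big_distrr -sumrB; apply: eq_bigr => b _.
rewrite /Dl /=; ring.
Qed.

Lemma key (F : 'I_n -> 'I_n -> R) : (forall a b, F a b = F b a) -> (forall a, F a a = 0) ->
  (forall a b : 'I_n, (a < b)%N -> 0 <= F a b) -> \sum_a \sum_b F a b = 0 ->
  forall a b, F a b = 0.
Proof.
move=> Fs F0 Fp S.
have Fge : forall a b, 0 <= F a b.
  move=> a b; case: (ltngtP a b) => h; first exact: Fp.
  - by rewrite Fs; exact: Fp.
  - by rewrite (val_inj h) F0.
have Sge : forall a, 0 <= \sum_b F a b by move=> a; apply: sumr_ge0 => b _.
move=> a b.
have Sa := psumr_eq0P (fun a _ => Sge a) S.
have Sa' := Sa a isT.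
by apply: (psumr_eq0P _ Sa') => // b' _; exact: Fge.
Qed.

Lemma det2 (A : 'M[R]_2) : \det A = A 0 0 * A 1 1 - A 0 1 * A 1 0.
Proof.
rewrite (expand_det_row _ 0) !big_ord_recl big_ord0 /cofactor !det_mx11 !mxE /=.
have E1 : lift (0:'I_2) (0:'I_1) = 1 by apply: val_inj.
have E3 : lift (lift (0:'I_2) (0 : 'I_1)) (0:'I_1) = 0 by apply: val_inj.
have E4 : lift (0:'I_2) (0 : 'I_1) = 1 by apply: val_inj.
have E5 : lift (1:'I_2) (0 : 'I_1) = 0 by apply: val_inj.
rewrite ?E1 ?E3 E5 /bump /= expr0 expr1; ring.
Qed.

Lemma Dl_nonneg (X : 'M[R]_(2,n)) (a b : 'I_n) : Gr_nonneg X -> (a < b)%N -> 0 <= Dl X a b.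
Proof.
move=> [_ G] ab.
have := G (fun r : 'I_2 => nth a [:: a; b] r).
rewrite det2 !mxE /Dl /=; apply.
by move=> x y; case: x => [[|[|?]] Hx] //; case: y => [[|[|?]] Hy].
Qed.

Lemma rank_le1 (X : 'M[R]_(2,n)) : (forall a b, Dl X a b = 0) -> (\rank X <= 1)%N.
Proof.
move=> HD.
suff [P [v ->]] : exists (P : 'M[R]_(2,1)) (v : 'rV[R]_n), X = P *m v.
  exact: leq_trans (mxrankM_maxr _ _) (rank_leq_row _).
case: (boolP [exists a, X 0 a != 0]) => [/existsP [a Ha]|N].
  exists (\col_(i < 2) (if i == 0 then 1 else X 1 a / X 0 a)), (row 0 X).
  apply/matrixP => i j; rewrite !mxE big_ord1 !mxE.
  case: i => [[|[|?]] Hi] //=.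
    by rewrite mul1r; congr (X _ j); apply: val_inj.
  have := HD a j; rewrite /Dl => /eqP; rewrite subr_eq0 => /eqP E; symmetry.
  rewrite mulrAC [X 1 a * _]mulrC -E mulrC mulrA mulVf // mul1r; congr (X _ j); exact: val_inj.
exists (\col_(i < 2) (if i == 0 then 0 else 1)), (row 1 X).
apply/matrixP => i j; rewrite !mxE big_ord1 !mxE.
case: i => [[|[|?]] Hi] //=.
  rewrite mul0r.
  have : ~~ (X 0 j != 0) by apply/negP => h; move/negP: N; apply; apply/existsP; exists j.
  rewrite negbK => /eqP <-; congr (X _ j); exact: val_inj.
by rewrite mul1r; congr (X _ j); apply: val_inj.
Qed.

Lemma ordS_val (k : 'I_n) : nat_of_ord (ordS k) = if (k.+1 < n)%N then k.+1 else 0%N.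
Proof.
rewrite /= ; case: ifP => h; first by rewrite modn_small.
have : k.+1 = n by have := ltn_ord k; lia.
by move=> ->; rewrite modnn.
Qed.

Lemma ord_pred_val (k : 'I_n) : nat_of_ord (ord_pred k) = if (k == 0 :> nat) then n.-1 else k.-1.
Proof.
rewrite /=; case: ifP => /eqP h.
  by rewrite h add0n modn_small //; have := ltn_ord k; lia.
have -> : (k + n).-1 = k.-1 + n by lia.
by rewrite modnDr modn_small //; have := ltn_ord k; lia.
Qed.

Definition sk (k : 'I_n) : R := if (k.+1 < n)%N then 1 else -1.

Lemma S1 (TP : totally_positive Z) (k a b : 'I_n) : (a < b)%N ->
  (a <> k :> nat) -> (b <> k :> nat) -> (a <> ordS k :> nat) -> (b <> ordS k :> nat) ->
  0 < sk k * D a b k (ordS k).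
Proof.
move=> ab h1 h2 h3 h4; rewrite /sk.
have Ek1 := ordS_val k; move: (ordS k) Ek1 h3 h4 => k1 Ek1 h3 h4.
have kn := ltn_ord k; have bn := ltn_ord b.
case: ifP Ek1 => hk Ek1; rewrite ?mul1r ?mulN1r.
- case: (ltnP b k) => hb.
    by apply: D_pos => //; lia.
  case: (ltnP a k) => ha.
    rewrite (D_sw12 a b k k1) (D_sw23 a k b k1) opprK; apply: D_pos => //; lia.
  rewrite (D_sw12 a b k k1) (D_sw23 a k b k1) (D_sw01 a k k1 b) (D_sw12 k a k1 b) !opprK.
  apply: D_pos => //; lia.
- rewrite (D_sw23 a b k k1) (D_sw12 a b k1 k) (D_sw01 a k1 b k) !opprK.
  apply: D_pos => //; lia.
Qed.

Definition sg3 (i : 'I_n) : R := if (0 < i)%N && (i.+1 < n)%N then -1 else 1.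

Lemma S2 (TP : totally_positive Z) (n3 : (3 <= n)%N) (i a b : 'I_n) : (a < b)%N ->
  ((a = i :> nat) /\ (b <> ord_pred i :> nat) /\ (b <> ordS i :> nat)) \/
  ((b = i :> nat) /\ (a <> ord_pred i :> nat) /\ (a <> ordS i :> nat)) ->
  0 < sg3 i * D a b (ord_pred i) (ordS i).
Proof.
move=> ab H; rewrite /sg3.
have Ep := ord_pred_val i; have Eq := ordS_val i; move: (ord_pred i) (ordS i) H Ep Eq => p q H Ep Eq.
have in_ := ltn_ord i; have bn := ltn_ord b.
case: ifP => hi; rewrite ?mul1r ?mulN1r.
- have Ep' : nat_of_ord p = i.-1 by rewrite Ep ifF //; apply/negbTE; lia.
  have Eq' : nat_of_ord q = i.+1 by rewrite Eq ifT //; lia.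
  case: H => [[Ha [Hb1 Hb2]]|[Hb [Ha1 Ha2]]].
  + rewrite (D_sw12 a b p q) (D_sw23 a p b q) (D_sw01 a p q b) !opprK.
    apply: D_pos => //; lia.
  + rewrite (D_sw12 a b p q) opprK; apply: D_pos => //; lia.
- case: (posnP i) => i0.
  + have Ep' : nat_of_ord p = n.-1 by rewrite Ep ifT //; apply/eqP.
    have Eq' : nat_of_ord q = 1%N by rewrite Eq ifT //; lia.
    case: H => [[Ha [Hb1 Hb2]]|[Hb [Ha1 Ha2]]]; last by lia.
    rewrite (D_sw23 a b p q) (D_sw12 a b q p) opprK; apply: D_pos => //; lia.
  + have Ep' : nat_of_ord p = i.-1 by rewrite Ep ifF //; apply/negbTE; lia.
    have Eq' : nat_of_ord q = 0%N by rewrite Eq ifF //; apply/negbTE; move: hi; rewrite i0 /=; lia.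
    case: H => [[Ha [Hb1 Hb2]]|[Hb [Ha1 Ha2]]]; first by lia.
    rewrite (D_sw23 a b p q) (D_sw12 a b q p) (D_sw01 a q b p) (D_sw23 q a b p) !opprK.
    apply: D_pos => //; move: hi; rewrite i0 /=; lia.
Qed.

Lemma det0_rank (A : 'M[R]_4) : (\rank A < 4)%N -> \det A = 0.
Proof.
move=> h; apply/eqP; apply: contraLR h => h.
have U : A \in unitmx by rewrite unitmxE unitfE.
by rewrite (mxrank_unit U).
Qed.

Lemma sub_colL m1 m2 (A : 'M[R]_(m1,4)) (B : 'M[R]_(m2,4)) : (A <= col_mx A B)%MS.
Proof. by have := submx_refl (col_mx A B); rewrite col_mx_sub => /andP[]. Qed.
Lemma sub_colR m1 m2 (A : 'M[R]_(m1,4)) (B : 'M[R]_(m2,4)) : (B <= col_mx A B)%MS.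
Proof. by have := submx_refl (col_mx A B); rewrite col_mx_sub => /andP[]. Qed.

Lemma br_plane (W : 'M[R]_(2,4)) (i c d : 'I_n) : (W <= plane3 Z i)%MS ->
  c \in [:: ord_pred i; i; ordS i] -> d \in [:: ord_pred i; i; ordS i] ->
  br Z W c d = 0.
Proof.
move=> HW Hc Hd.
have Hr : forall e, e \in [:: ord_pred i; i; ordS i] -> (row e Z <= plane3 Z i)%MS.
  move=> e; rewrite !inE => /orP[/eqP->|/orP[/eqP->|/eqP->]]; rewrite /plane3.
  - exact: sub_colL.
  - apply: (@submx_trans _ _ _ _ _ _ (col_mx (row i Z) (row (ordS i) Z))); [exact: sub_colL | idtac]. exact: (sub_colR (row (ord_pred i) Z) (col_mx (row i Z) (row (ordS i) Z))).
  - apply: (@submx_trans _ _ _ _ _ _ (col_mx (row i Z) (row (ordS i) Z))); [exact: sub_colR | exact: (sub_colR (row (ord_pred i) Z) (col_mx (row i Z) (row (ordS i) Z)))].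
apply: det0_rank.
have S : (col_mx W (col_mx (row c Z) (row d Z)) <= plane3 Z i)%MS.
  by rewrite !col_mx_sub HW !Hr.
have h2 := mxrankS S; have h1 := rank_leq_row (plane3 Z i). exact: (leq_ltn_trans h2 (leq_ltn_trans h1 (isT : (3 < 4)%N))).
Qed.

Lemma br_line (W : 'M[R]_(2,4)) (j : 'I_n) : (W :&: line2 Z j)%MS != 0 ->
  br Z W j (ordS j) = 0.
Proof.
move=> H; apply: det0_rank.
have E := mxrank_sum_cap W (line2 Z j).
have E2 : \rank (W + line2 Z j)%MS = \rank (col_mx W (line2 Z j)) := (addsmxE W (line2 Z j)).1.
have h1 := rank_leq_row W; have h2 := rank_leq_row (line2 Z j).
have h3 : (0 < \rank (W :&: line2 Z j))%N by rewrite lt0n mxrank_eq0.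
rewrite /line2 in E2 E h2 h3 *.
rewrite -E2; lia.
Qed.

Lemma br_mul (M : 'M[R]_2) (W : 'M[R]_(2,4)) c d : br Z (M *m W) c d = \det M * br Z W c d.
Proof.
rewrite /br.
have -> : col_mx (M *m W) (col_mx (row c Z) (row d Z)) =
   block_mx M 0 0 1%:M *m col_mx W (col_mx (row c Z) (row d Z)).
  by rewrite mul_block_col !mul0mx mul1mx add0r addr0.
by rewrite det_mulmx det_ublock det1 mulr1.
Qed.

Lemma vanish (X : 'M[R]_(2,n)) c d (sig : R) : br Z (X *m Z) c d = 0 ->
  (forall a b : 'I_n, (a < b)%N -> 0 <= sig * (Dl X a b * D a b c d)) ->
  forall a b : 'I_n, (a < b)%N -> 0 < sig * D a b c d -> Dl X a b = 0.
Proof.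
move=> H0 Hp a b ab hs.
have K := @key (fun a b => sig * (Dl X a b * D a b c d)).
have E : sig * (Dl X a b * D a b c d) = 0.
  apply: K => //.
  - move=> x y; rewrite /Dl (D_sw01 y); congr (_ * _); ring.
  - by move=> x; rewrite /Dl subrr mul0r mulr0.
  - under eq_bigr => x _ do rewrite -big_distrr /=.
    rewrite -big_distrr /=.
    have := br_exp X c d; rewrite H0 mul0rn => <-; by rewrite mulr0.
move: E; rewrite mulrCA => /eqP; rewrite mulf_eq0 (gt_eqF hs) orbF => /eqP //.
Qed.

Lemma vanish_k (TP : totally_positive Z) (X : 'M[R]_(2,n)) (k : 'I_n) : Gr_nonneg X ->
  br Z (X *m Z) k (ordS k) = 0 ->
  forall a b : 'I_n, (a < b)%N ->
  (a <> k :> nat) -> (b <> k :> nat) -> (a <> ordS k :> nat) -> (b <> ordS k :> nat) ->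
  Dl X a b = 0.
Proof.
move=> GX H0 a b ab h1 h2 h3 h4.
apply: (vanish (sig := sk k) H0) => //; last exact: S1.
move=> x y xy; rewrite mulrCA; apply: mulr_ge0; first exact: Dl_nonneg.
case: (eqVneq x k) => [->|n1]; first by rewrite D_rep02 mulr0.
case: (eqVneq y k) => [->|n2]; first by rewrite D_rep12 mulr0.
case: (eqVneq x (ordS k)) => [->|n3]; first by rewrite D_rep03 mulr0.
case: (eqVneq y (ordS k)) => [->|n4]; first by rewrite D_rep13 mulr0.
apply: ltW; apply: S1 => // e; [move: n1|move: n2|move: n3|move: n4];
  by rewrite (val_inj e) eqxx.
Qed.
End S.

Lemma neg4 (x1 y1 x2 y2 x3 y3 x4 y4 : nat) :
  ~ [/\ x1 <> y1, x2 <> y2, x3 <> y3 & x4 <> y4] -> x1 = y1 \/ x2 = y2 \/ x3 = y3 \/ x4 = y4.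
Proof.
move=> h.
case: (PeanoNat.Nat.eq_dec x1 y1) => [?|n1]; first by left.
case: (PeanoNat.Nat.eq_dec x2 y2) => [?|n2]; first by right; left.
case: (PeanoNat.Nat.eq_dec x3 y3) => [?|n3]; first by right; right; left.
case: (PeanoNat.Nat.eq_dec x4 y4) => [?|n4]; first by right; right; right.
by exfalso; apply: h.
Qed.

Lemma comb (a b p i q j j' : nat) : (a < b)%N -> p <> i -> q <> i -> p <> q ->
  j <> p -> j <> i -> j <> q -> j' <> p -> j' <> i -> j' <> q ->
  a = p \/ b = p \/ a = i \/ b = i -> a = i \/ b = i \/ a = q \/ b = q ->
  a = j \/ b = j \/ a = j' \/ b = j' ->
  (a = i /\ b <> p /\ b <> q) \/ (b = i /\ a <> p /\ a <> q).
Proof.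
move=> /ssrnat.ltP ab h1 h2 h3 h4 h5 h6 h7 h8 h9 d1 d2 d3.
case: d1 => [e1|[e1|[e1|e1]]]; case: d2 => [e2|[e2|[e2|e2]]]; case: d3 => [e3|[e3|[e3|e3]]]; subst; first [by [] | by left | by right | Lia.lia].
Qed.


Lemma ord_facts n (i : 'I_n) : (3 <= n)%N ->
  (ord_pred i <> i :> nat) /\ (ordS i <> i :> nat) /\ (ord_pred i <> ordS i :> nat).
Proof.
move=> n3; have := ord_pred_val i; have := ordS_val i; have := ltn_ord i.
case: eqP => h1; case: ifP => h2 /= h3 Eq Ep; rewrite Eq Ep; lia.
Qed.

Unset Implicit Arguments.
Set Strict Implicit.

Theorem lemma4p5 (R : realType) (n : nat) (Z : 'M[R]_(n, 4)) :
  (5 <= n)%N ->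
  totally_positive Z ->
  assumptionG Z ->
  forall i j : 'I_n,
    [disjoint [set ord_pred i; i; ordS i] & [set j; ordS j]] ->
    forall W : 'M[R]_(2, 4),
      in_amplituhedron Z W ->
      ~ ((W <= plane3 Z i)%MS /\ (W :&: line2 Z j)%MS != 0).
Proof.
move=> n5 TP _ i j Hdisj W [rW [X [GX HWX]]] [Hpl Hln].
move/andP: HWX => [_ /submxP [M EY]].
have HY : forall c d, br Z W c d = 0 -> br Z (X *m Z) c d = 0.
  by move=> c d h; rewrite EY br_mul h mulr0.
have pS : ordS (ord_pred i) = i by exact: ord_predK.
have Vp := vanish_k TP GX (k := ord_pred i).
rewrite pS in Vp.
have mp : ord_pred i \in [:: ord_pred i; i; ordS i] by rewrite inE eqxx.
have mi : i \in [:: ord_pred i; i; ordS i] by rewrite !inE eqxx ?orbT.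
have mq : ordS i \in [:: ord_pred i; i; ordS i] by rewrite !inE eqxx ?orbT.
have V1 := Vp (HY _ _ (br_plane Hpl mp mi)).
have V2 := vanish_k TP GX (HY _ _ (br_plane Hpl mi mq)).
have V3 := vanish_k TP GX (HY _ _ (br_line Hln)).
have H4 := HY _ _ (br_plane Hpl mp mq).
have in_ := ltn_ord i; have jn := ltn_ord j.
have dj : forall x, x \in [set j; ordS j] -> x \notin [set ord_pred i; i; ordS i].
  by move=> x hx; apply/negP => hx'; have := disjointFr Hdisj hx'; rewrite hx.
have nat_ne : forall x y : 'I_n, x != y -> (x <> y :> nat).
  by move=> x y h e; move: h; rewrite (val_inj e) eqxx.
have dj1 := dj j; have dj2 := dj (ordS j).
rewrite !inE eqxx ?orbT in dj1 dj2.
have := dj1 isT; have := dj2 (introT orP (or_intror (eqxx _))); rewrite !negb_or => /andP[/andP[a1 a2] a3] /andP[/andP[b1 b2] b3].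
move/nat_ne in a1; move/nat_ne in a2; move/nat_ne in a3.
move/nat_ne in b1; move/nat_ne in b2; move/nat_ne in b3.
have n3 : (3 <= n)%N by apply: leq_trans n5.
have F1 := ord_facts i n3.
have step : forall a b : 'I_n, (a < b)%N -> Dl X a b != 0 ->
    ((a = i :> nat) /\ (b <> ord_pred i :> nat) /\ (b <> ordS i :> nat)) \/
    ((b = i :> nat) /\ (a <> ord_pred i :> nat) /\ (a <> ordS i :> nat)).
  move=> a b ab /eqP nz.
  have c1 : ~ [/\ (a <> ord_pred i :> nat), (b <> ord_pred i :> nat), (a <> i :> nat) & (b <> i :> nat)].
    by case=> h1 h2 h3 h4; apply: nz; exact: V1.
  have c2 : ~ [/\ (a <> i :> nat), (b <> i :> nat), (a <> ordS i :> nat) & (b <> ordS i :> nat)].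
    by case=> h1 h2 h3 h4; apply: nz; exact: V2.
  have c3 : ~ [/\ (a <> j :> nat), (b <> j :> nat), (a <> ordS j :> nat) & (b <> ordS j :> nat)].
    by case=> h1 h2 h3 h4; apply: nz; exact: V3.
  case: F1 => f1 [f2 f3].
  exact: (comb ab f1 f2 f3 b1 b2 b3 a1 a2 a3 (neg4 c1) (neg4 c2) (neg4 c3)).
have Hall : forall a b : 'I_n, (a < b)%N -> Dl X a b = 0.
  move=> a b ab; case: (eqVneq (Dl X a b) 0) => // nz.
  have P4 : forall x y : 'I_n, (x < y)%N -> 0 <= @sg3 R n i * (Dl X x y * D Z x y (ord_pred i) (ordS i)).
    move=> x y xy; case: (eqVneq (Dl X x y) 0) => [->|nzxy]; first by rewrite mul0r mulr0.
  rewrite mulrCA; apply: mulr_ge0; first exact: Dl_nonneg.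
  apply: ltW; exact: (S2 TP n3 xy (step x y xy nzxy)).
  exact: (vanish H4 P4 ab (S2 TP n3 ab (step a b ab nz))).
have : (\rank X <= 1)%N.
  apply: rank_le1 => a b; case: (ltngtP a b) => h; first exact: Hall.
    have -> : Dl X a b = - Dl X b a by rewrite /Dl; ring.
    by rewrite Hall // oppr0.
  by rewrite (val_inj h) /Dl subrr.
by rewrite GX.1.
Qed.
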